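(* Let $\sigma\in\mathcal C_n(321)$ and $\tau\in\mathcal C_m(321)$ with $n,m\ge1$, and let $k$ be the index with $\hat\tau_k=1$. Define the word $$\hat\tau\odot\hat\sigma=(\hat\tau_1+n)\cdots(\hat\tau_k+n)\,\hat\sigma_1\hat\sigma_2\cdots\hat\sigma_n\,(\hat\tau_{k+1}+n)\cdots(\hat\tau_m+n)\in S_{n+m}.$$ Then $\theta^{-1}(\hat\tau\odot\hat\sigma)\in\mathcal C_{n+m}(321)$.
   Context: Permutations of $[n]$ are written in one-line notation. A permutation contains $321$ if there are $i<j<k$ with $\pi_i>\pi_j>\pi_k$. $\mathcal C_n$ is the set of cyclic permutations of $[n]$ (a single $n$-cycle), and $\mathcal C_n(321)$ those avoiding $321$. The standard cycle notation of $\pi$ writes each cycle with its largest element first, as $(m,\pi(m),\pi^2(m),\dots)$, and lists the cycles in increasing order of their largest elements. $\theta:S_n\to S_n$ sends $\pi$ to the permutation whose one-line notation is the standard cycle notation of $\pi$ with parentheses erased; $\hat\pi=\theta(\pi)$. *)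

(* Defs.v *)
From mathcomp Require Import all_boot all_fingroup.
Set Implicit Arguments. Unset Strict Implicit. Unset Printing Implicit Defensive.

(* Permutations of [n] are modelled as {perm 'I_n}; element i : 'I_n stands
   for the integer i+1 of [n]. Words (one-line notations) are seq nat with
   values in 1..n. *)

Definition oneline n (p : {perm 'I_n}) : seq nat := [seq (p i).+1 | i <- enum 'I_n].

Definition contains321 (w : seq nat) : Prop :=
  exists i j k, [/\ i < j, j < k, k < size w,
    nth 0 w j < nth 0 w i & nth 0 w k < nth 0 w j].
Definition avoids321 (w : seq nat) : Prop := ~ contains321 w.

Definition cyclic_perm n (p : {perm 'I_n}) : Prop :=
  forall x : 'I_n, porbit p x = [set: 'I_n].

Definition C321 n (p : {perm 'I_n}) : Prop := cyclic_perm p /\ avoids321 (oneline p).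

Definition cycle_max n (p : {perm 'I_n}) (m : 'I_n) : bool :=
  [forall x in porbit p m, x <= m].

Definition cycle_word n (p : {perm 'I_n}) (m : 'I_n) : seq nat :=
  [seq (nat_of_ord x).+1 | x <- traject p m #|porbit p m|].

(* theta(p): standard cycle notation with parentheses erased, as a word *)
Definition theta_word n (p : {perm 'I_n}) : seq nat :=
  flatten [seq cycle_word p m | m <- enum 'I_n & cycle_max p m].

Definition odot (n : nat) (t s : seq nat) : seq nat :=
  let k := index 1 t in
  [seq x + n | x <- take k.+1 t] ++ s ++ [seq x + n | x <- drop k.+1 t].

(* Main.v *)
Require Import Defs.
From mathcomp Require Import all_boot all_fingroup.
From mathcomp Require Import zify.
Set Implicit Arguments. Unset Strict Implicit. Unset Printing Implicit Defensive.

Section Gen.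
Variable N : nat.
Implicit Types p q : {perm 'I_N.+1}.

Lemma cyc_card p x : cyclic_perm p -> #|porbit p x| = N.+1.
Proof. by move=> c; rewrite c cardsT card_ord. Qed.

Lemma cyc_iter p x : cyclic_perm p -> iter N.+1 p x = x.
Proof. by move=> c; have := iter_porbit p x; rewrite (cyc_card x c). Qed.

Lemma cyc_mem p x y : cyclic_perm p -> y \in traject p x N.+1.
Proof. by move=> c; have := porbit_traject p x y; rewrite (cyc_card x c) c inE => <-. Qed.

Lemma cyc_uniq p x : cyclic_perm p -> uniq (traject p x N.+1).
Proof. by move=> c; have := uniq_traject_porbit p x; rewrite (cyc_card x c). Qed.

Lemma cyc_iter_inj p x i j : cyclic_perm p -> i < N.+1 -> j < N.+1 ->
  iter i p x = iter j p x -> i = j.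
Proof.
move=> c hi hj e.
have U := cyc_uniq x c.
apply/eqP; rewrite -(nth_uniq x _ _ U) ?size_traject //.
by rewrite !nth_traject // e.
Qed.

Lemma theta_cyc p : cyclic_perm p ->
  theta_word p = [seq (val y).+1 | y <- traject p ord_max N.+1].
Proof.
move=> c.
have cm : forall z, cycle_max p z = (z == ord_max).
  move=> z; apply/forallP/eqP => [H | ->].
  - apply/val_inj/eqP; rewrite /= eqn_leq leq_ord /=.
    by have := H ord_max; rewrite c inE.
  - by move=> y; apply/implyP => _; rewrite leq_ord.
rewrite /theta_word (eq_filter cm) filter_pred1_uniq ?enum_uniq ?mem_enum //=.
by rewrite cats0 /cycle_word (cyc_card _ c).
Qed.

Lemma head_theta p : head 0 (theta_word p) = N.+1 -> cyclic_perm p.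
Proof.
move=> h.
set s := [seq m <- enum 'I_N.+1 | cycle_max p m].
have maxin : cycle_max p ord_max.
  by apply/forallP => y; apply/implyP => _; exact: leq_ord.
have sorted_s : sorted (fun a b : 'I_N.+1 => a < b) s.
  apply: sorted_filter; first by move=> ???; apply: ltn_trans.
  by have := iota_ltn_sorted 0 N.+1; rewrite -val_enum_ord sorted_map.
have mx : ord_max \in s by rewrite mem_filter maxin mem_enum.
have key : forall z, cycle_max p z -> z = ord_max.
  move: h sorted_s mx; rewrite /theta_word -/s.
  case Es: s => [//|a s'] /=.
  rewrite /cycle_word; case E: #|porbit p a| (card_porbit_neq0 p a) => [|k] //= _ [ha] Hs _.
  have al : all (fun b : 'I_N.+1 => a < b) s'.
    by apply: order_path_min Hs => y x z; exact: ltn_trans.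
  move=> z zm.
  have : z \in a :: s' by rewrite -Es mem_filter zm mem_enum.
  rewrite inE => /orP [/eqP -> | zs]; first by apply/val_inj.
  have := allP al z zs; rewrite ha => /= lt; have := leq_ord z; lia.
have key2 : forall x, porbit p x = porbit p ord_max.
  move=> x.
  case: (@arg_maxnP _ x (mem (porbit p x)) val (porbit_id p x)) => M Mx Mmax.
  have cM : cycle_max p M.
    apply/forallP => y; apply/implyP => yM; apply: Mmax.
    by move: yM; have /eqP -> : porbit p M == porbit p x by rewrite eq_porbit_mem.
  have := key _ cM => EM; rewrite EM in Mx.
  by apply/eqP; rewrite eq_porbit_mem porbit_sym.
by move=> x; apply/setP => y; rewrite inE key2 -(key2 y) porbit_id.
Qed.

Lemma cyc_eq p q : cyclic_perm p -> cyclic_perm q ->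
  traject p ord_max N.+1 = traject q ord_max N.+1 -> p = q.
Proof.
move=> cp cq e; apply/permP => y.
have /trajectP [i hi ->] := cyc_mem ord_max y cp.
have ei : forall j, j < N.+1 -> iter j p ord_max = iter j q ord_max.
  by move=> j hj; rewrite -!(nth_traject _ hj) e.
case: (ltngtP i N) => [lt|gt|->]; last first.
- by rewrite -iterS cyc_iter // (ei N) // -iterS cyc_iter.
- lia.
- by rewrite -iterS (ei i.+1) // (ei i hi) -iterS.
Qed.

End Gen.

Lemma avoid_iff K (p : {perm 'I_K}) :
  (forall i j k : 'I_K, i < j -> j < k -> ~~ ((p j < p i) && (p k < p j))) ->
  avoids321 (oneline p).
Proof.
move=> H [i [j [k [ij jk kK vi vj]]]].
have nthE : forall l (hl : l < K), nth 0 (oneline p) l = (p (Ordinal hl)).+1.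
  move=> l hl; rewrite /oneline (nth_map (Ordinal hl)) ?size_enum_ord //.
  by congr (_.+1); congr (nat_of_ord (p _)); apply: val_inj; rewrite /= nth_enum_ord.
move: kK; rewrite size_map size_enum_ord => kK.
have jK : j < K by lia.
have iK : i < K by lia.
move: vi vj; rewrite (nthE _ iK) (nthE _ jK) (nthE _ kK) !ltnS => vi vj.
by have := H (Ordinal iK) (Ordinal jK) (Ordinal kK) ij jk; rewrite vi vj.
Qed.

Lemma nthE K (p : {perm 'I_K}) l (hl : l < K) :
  nth 0 (oneline p) l = (p (Ordinal hl)).+1.
Proof.
rewrite /oneline (nth_map (Ordinal hl)) ?size_enum_ord //.
by congr (_.+1); congr (nat_of_ord (p _)); apply: val_inj; rewrite /= nth_enum_ord.
Qed.

Lemma nthE' K (p : {perm 'I_K}) (x : 'I_K) : nth 0 (oneline p) x = (p x).+1.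
Proof. by rewrite (nthE p (ltn_ord x)); congr (_.+1); congr (nat_of_ord (p _)); apply: val_inj. Qed.

Lemma avoid_ord K (p : {perm 'I_K}) : avoids321 (oneline p) ->
  forall i j k : 'I_K, i < j -> j < k -> ~~ ((p j < p i) && (p k < p j)).
Proof.
move=> H i j k ij jk; apply/negP => /andP [h1 h2]; apply: H.
exists i, j, k; split => //.
- by rewrite /oneline size_map size_enum_ord.
- by rewrite !nthE' ltnS.
- by rewrite !nthE' ltnS.
Qed.

Lemma iter_mapL (A B : Type) (f : B -> B) (g : A -> A) (h : A -> B) x l :
  (forall i, i < l -> f (h (iter i g x)) = h (iter i.+1 g x)) ->
  forall i, i <= l -> iter i f (h x) = h (iter i g x).
Proof. by move=> H; elim => [//|i IH] hi /=; rewrite IH ?(ltnW hi) // H. Qed.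

Lemma traject_mapL A B (f : B -> B) (g : A -> A) (h : A -> B) x l :
  (forall i, i.+1 < l -> f (h (iter i g x)) = h (iter i.+1 g x)) ->
  traject f (h x) l = map h (traject g x l).
Proof.
elim: l x => [//|l IH] x H /=; congr (_ :: _).
case: l IH H => [//|l] IH H.
have -> : f (h x) = h (g x) by exact: (H 0).
apply: IH => i hi; rewrite -!iterSr; exact: (H i.+1).
Qed.

Section Constr.
Variables (n' m' : nat) (s : {perm 'I_n'.+1}) (t : {perm 'I_m'.+1}).
Local Notation n := n'.+1.
Local Notation m := m'.+1.

Definition fsum (x : 'I_(n + m)) : 'I_(n + m) :=
  match split x with inl i => lshift m (s i) | inr j => rshift n (t j) end.

Lemma fsum_inj : injective fsum.
Proof.
move=> x y; rewrite /fsum => e; rewrite -[x]splitK -[y]splitK; move: e.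
case: (split x) => [a|b]; case: (split y) => [c|d] /= /(congr1 val) /= e;
  apply: val_inj => /=.
- by have /perm_inj -> : s a = s c by apply: val_inj.
- have := ltn_ord (s a); lia.
- have := ltn_ord (s c); lia.
- have /perm_inj -> // : t b = t d by apply: val_inj => /=; lia.
Qed.

Definition pi : {perm 'I_(n + m)} :=
  perm fsum_inj * tperm (lshift m ord_max) (rshift n (t ord0)).

Lemma piL a : pi (lshift m a) =
  if s a == ord_max then rshift n (t ord0) else lshift m (s a).
Proof.
rewrite permM [perm fsum_inj _]permE /fsum.
have -> : split (lshift m a) = inl a := unsplitK (inl a).
case: eqP => [-> | ne]; first by rewrite tpermL.
rewrite tpermD //; apply/eqP => /(congr1 val) /= e.
- by apply: ne; apply: val_inj.
- have := ltn_ord (s a); lia.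
Qed.

Lemma piR b : pi (rshift n b) =
  if b == ord0 then lshift m ord_max else rshift n (t b).
Proof.
rewrite permM [perm fsum_inj _]permE /fsum.
have -> : split (rshift n b) = inr b := unsplitK (inr b).
case: eqP => [-> | ne]; first by rewrite tpermR.
rewrite tpermD //; apply/eqP => /(congr1 val) /= e.
- lia.
- by apply: ne; apply: (@perm_inj _ t); apply: val_inj => /=; lia.
Qed.


Hypotheses (cs : cyclic_perm s) (ct : cyclic_perm t).

Definition kk := index ord0 (traject t ord_max m).

Lemma hk : kk < m.
Proof. by have := index_mem ord0 (traject t ord_max m); rewrite size_traject (cyc_mem _ _ ct). Qed.

Lemma hk0 : iter kk t ord_max = ord0.
Proof. by rewrite -(nth_traject _ hk) nth_index // (cyc_mem _ _ ct). Qed.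

Lemma hkne i : i < m -> i != kk -> iter i t ord_max != ord0.
Proof.
move=> hi ne; apply/eqP => e; move/eqP: ne; apply.
by apply: (cyc_iter_inj (x:=ord_max) ct hi hk); rewrite e hk0.
Qed.

Lemma hsne i : 0 < i -> i < n -> iter i s ord_max != ord_max.
Proof.
move=> h0 hi; apply/eqP => e.
have := cyc_iter_inj (x:=ord_max) (i:=i) (j:=0) cs hi (ltn0Sn n') e; lia.
Qed.

Definition W0 : seq 'I_(n + m) :=
  map (@rshift n m) (traject t ord_max kk.+1) ++ map (@lshift n m) (traject s ord_max n)
  ++ map (@rshift n m) (traject t (iter kk.+1 t ord_max) (m - kk.+1)).

Lemma traj_pi : traject pi (rshift n ord_max) (n + m) = W0.
Proof.
have hk := hk.
have E := trajectD pi kk.+1 (n + (m - kk.+1)) (rshift n ord_max).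
rewrite (_ : kk.+1 + (n + (m - kk.+1)) = n + m) in E; last by lia.
rewrite E trajectD.
have P1 : forall i, i < kk -> pi (rshift n (iter i t ord_max)) = rshift n (iter i.+1 t ord_max).
  move=> i hi; rewrite piR ifN //; apply: hkne; lia.
rewrite (traject_mapL (g:=t) (x:=ord_max) (l:=kk.+1)); last by move=> i hi; apply: P1.
have -> : iter kk.+1 pi (rshift n ord_max) = lshift m ord_max.
  by rewrite iterS (iter_mapL (l:=kk) P1) // hk0 piR eqxx.
have P2 : forall i, i < n' -> pi (lshift m (iter i s ord_max)) = lshift m (iter i.+1 s ord_max).
  move=> i hi; rewrite piL ifN //; apply: (hsne (i:=i.+1)); lia.
rewrite (traject_mapL (g:=s) (x:=ord_max) (l:=n)); last by move=> i hi; apply: P2.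
have -> : iter n pi (lshift m ord_max) = rshift n (iter kk.+1 t ord_max).
  rewrite iterS (iter_mapL (l:=n') P2) // piL.
  have -> : s (iter n' s ord_max) = ord_max by rewrite -iterS cyc_iter.
  by rewrite eqxx iterS hk0.
rewrite (traject_mapL (g:=t) (x:=iter kk.+1 t ord_max) (l:=m - kk.+1)) //.
move=> i hi; rewrite piR ifN // -iterD; apply: hkne; lia.
Qed.

Lemma splitT : traject t ord_max m =
  traject t ord_max kk.+1 ++ traject t (iter kk.+1 t ord_max) (m - kk.+1).
Proof.
have E := trajectD t kk.+1 (m - kk.+1) ord_max.
by rewrite subnKC ?hk // in E.
Qed.

Lemma cover y : y \in W0.
Proof.
case: (split_ordP y) => [a ->|b ->]; rewrite !mem_cat.
- by rewrite map_f ?orbT // (cyc_mem _ _ cs).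
- have := cyc_mem ord_max b ct; rewrite splitT mem_cat => /orP [h|h].
  + by rewrite (map_f _ h).
  + by rewrite (map_f _ h) !orbT.
Qed.

Lemma pi_cyc : cyclic_perm pi.
Proof.
have P : forall z, z \in porbit pi (rshift n ord_max).
  move=> z; have := cover z; rewrite -traj_pi => /trajectP [i _ ->].
  by rewrite -permX mem_porbit.
move=> x; apply/setP => y; rewrite inE.
have /eqP -> : porbit pi x == porbit pi (rshift n ord_max)
  by rewrite eq_porbit_mem P.
exact: P.
Qed.

Lemma odot_eq : odot n (theta_word t) (theta_word s) = [seq (val y).+1 | y <- W0].
Proof.
rewrite /odot (theta_cyc ct) (theta_cyc cs).
have E : index 1 [seq (val y).+1 | y <- traject t ord_max m] = kk.
  transitivity (index ((fun y : 'I_m => (val y).+1) ord0)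
     [seq (val y).+1 | y <- traject t ord_max m]); first by [].
  by rewrite index_map // => a b /succn_inj /val_inj.
rewrite E -map_take -map_drop take_traject; last exact: hk.
rewrite splitT drop_size_cat ?size_traject //.
rewrite /W0 !map_cat -!map_comp; congr (_ ++ _ ++ _); apply: eq_map => y /=; lia.
Qed.

Lemma theta_pi : theta_word pi = odot n (theta_word t) (theta_word s).
Proof.
rewrite odot_eq (theta_cyc (N := n' + m) pi_cyc).
have eom : (ord_max : 'I_(n' + m).+1) = rshift n (ord_max : 'I_m).
  by apply: val_inj => /=; lia.
by rewrite eom; exact: (congr1 _ traj_pi).
Qed.

Lemma uniq_pi (p : {perm 'I_(n + m)}) :
  theta_word p = odot n (theta_word t) (theta_word s) -> p = pi.
Proof.
move=> e.
have cp : cyclic_perm p.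
  apply: (head_theta (N := n' + m)); rewrite e odot_eq /=; lia.
apply: (cyc_eq (N := n' + m) cp pi_cyc).
apply: (inj_map (f := fun y : 'I_(n + m) => (val y).+1)).
  by move=> a b /succn_inj /val_inj.
by rewrite -(theta_cyc cp) -(theta_cyc pi_cyc) e theta_pi.
Qed.

Lemma vL a : val (pi (lshift m a)) =
  if val (s a) == n' then n + t ord0 else s a.
Proof.
rewrite piL; case: (s a =P ord_max) => [->|ne] /=; first by rewrite eqxx.
by case: eqP => // e; case: ne; exact: val_inj.
Qed.

Lemma vR b : val (pi (rshift n b)) =
  if val b == 0 then n' else n + t b.
Proof.
rewrite piR; case: (b =P ord0) => [->|ne] /=; first by [].
by case: eqP => // e; case: ne; exact: val_inj.
Qed.

Lemma pi_avoid : avoids321 (oneline s) -> avoids321 (oneline t) ->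
  avoids321 (oneline pi).
Proof.
move=> /avoid_ord Hs /avoid_ord Ht; apply: avoid_iff => i j k.
case: (split_ordP i) => [a1 ->|b1 ->]; case: (split_ordP j) => [a2 ->|b2 ->];
case: (split_ordP k) => [a3 ->|b3 ->]; rewrite ?vL ?vR /= => ij jk.
- have := Hs a1 a2 a3 ij jk.
  have := leq_ord (s a1); have := leq_ord (s a2); have := leq_ord (s a3).
  by repeat (case: ifP => ?); lia.
- have := leq_ord (s a1); have := leq_ord (s a2).
  by repeat (case: ifP => ?); lia.
- have := ltn_ord a3; lia.
- have := leq_ord (s a1); have := leq_ord (t b2); have := leq_ord (t b3).
  have : (0 < b2) -> b2 < b3 -> ~~ ((t b2 < t ord0) && (t b3 < t b2)) := Ht ord0 b2 b3.
  by repeat (case: ifP => ?); lia.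
- have := ltn_ord a2; lia.
- have := ltn_ord a2; lia.
- have := ltn_ord a3; lia.
- have : b1 < b2 by lia.
  have : b2 < b3 by lia.
  move=> h2 h1; have := Ht b1 b2 b3 h1 h2.
  have := leq_ord (t b1); have := leq_ord (t b2); have := leq_ord (t b3).
  by repeat (case: ifP => ?); lia.
Qed.

End Constr.

Theorem mainTheorem7 (n m : nat) (sigma : {perm 'I_n}) (tau : {perm 'I_m}) :
  0 < n -> 0 < m -> C321 sigma -> C321 tau ->
  let w := odot n (theta_word tau) (theta_word sigma) in
  (exists pi : {perm 'I_(n + m)}, theta_word pi = w) /\
  (forall pi : {perm 'I_(n + m)}, theta_word pi = w -> C321 pi).
Proof.
case: n sigma => [//|n'] sigma; case: m tau => [//|m'] tau _ _ [cs as3] [ct at3] w.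
split; first by exists (pi sigma tau); rewrite theta_pi.
move=> p /(uniq_pi cs ct) ->; split; first exact: pi_cyc.
exact: pi_avoid.
Qed.
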